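(* Let $n\ge 2$. If $\beta=(b_1,\dots,b_n)\in PF_{n,n-1}\setminus PF_{n,n-2}$, then $b_n=n$.
   Context: For $n\in\mathbb{N}$ let $[n]=\{1,\dots,n\}$ and $PP_n=[n]^n$. For an integer $k\ge 0$, the $k$-Naples parking rule: there are $n$ spots numbered $1,\dots,n$ west to east, initially empty; cars $c_1,\dots,c_n$ arrive in order, car $c_i$ preferring spot $b_i$. If spot $b_i$ is empty, $c_i$ parks there. Otherwise $c_i$ checks spots $b_i-1,\dots,b_i-k$ in this order (skipping those $<1$) and parks in the first empty one; if all are occupied, it drives east and parks in the first empty spot numbered greater than $b_i$, failing to park if none exists. $PF_{n,k}$ is the set of $\beta\in PP_n$ for which all cars park. *)

(* Defs.v *)
From mathcomp Require Import all_boot.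
Set Implicit Arguments. Unset Strict Implicit. Unset Printing Implicit Defensive.

(* Spots are numbered 1..n; occ is the list of occupied spots. *)

Definition naples_spot (n k : nat) (occ : seq nat) (b : nat) : option nat :=
  if b \notin occ then Some b
  else
    (* backward checks b-1, ..., b-k, skipping those < 1 *)
    let back := [seq b - j | j <- iota 1 k & (j < b) && (b - j \notin occ)] in
    match back with
    | s :: _ => Some s
    | [::] =>
      let fwd := [seq s <- iota b.+1 (n - b) | s \notin occ] in
      match fwd with
      | s :: _ => Some s
      | [::] => None
      end
    end.

Fixpoint naples_run (n k : nat) (occ : seq nat) (beta : seq nat) : option (seq nat) :=
  match beta with
  | [::] => Some occ
  | b :: beta' =>
    match naples_spot n k occ b with
    | Some s => naples_run n k (s :: occ) beta'
    | None => None
    end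
  end.

Definition is_pref (n : nat) (beta : seq nat) : bool :=
  (size beta == n) && all (fun b => (1 <= b <= n)) beta.

Definition in_PF (n k : nat) (beta : seq nat) : bool :=
  is_pref n beta && (naples_run n k [::] beta != None).

Example ex1 : in_PF 3 1 [:: 2; 2; 2] = true. Proof. by []. Qed.
Example ex2 : in_PF 3 0 [:: 2; 2; 2] = false. Proof. by []. Qed.
Example ex3 : in_PF 2 1 [:: 2; 2] = true. Proof. by []. Qed.
Example ex4 : in_PF 2 0 [:: 2; 2] = false. Proof. by []. Qed.
Example ex5 : in_PF 3 2 [:: 3; 3; 3] = true. Proof. by []. Qed.
Example ex6 : in_PF 3 1 [:: 3; 3; 3] = false. Proof. by []. Qed.

(* Main.v *)
Require Import Defs.
From mathcomp Require Import all_boot.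
From mathcomp Require Import zify.

Lemma filter_nil_in (p : pred nat) s :
  (forall x, x \in s -> ~~ p x) -> filter p s = [::].
Proof.
elim: s => //= a s IH H.
rewrite (negbTE (H a (mem_head _ _))) IH // => x Hx; apply: H.
by rewrite in_cons Hx orbT.
Qed.

Lemma full_fail n k occ c : 1 <= c <= n ->
  (forall x, 1 <= x <= n -> x \in occ) -> naples_spot n k occ c = None.
Proof.
move=> Hc Hall; rewrite /naples_spot (Hall c Hc) /=.
rewrite filter_nil_in /=.
  rewrite filter_nil_in // => x; rewrite mem_iota => /andP[H1 H2].
  by rewrite negbK; apply: Hall; lia.
move=> j; rewrite mem_iota => /andP[H1 H2]; rewrite negb_and negbK.
case: (ltnP j c) => Hjc //=.
have -> : c - j \in occ by apply: Hall; lia.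
by [].
Qed.

Lemma spot_cmp m occ b : 1 <= b <= m.+2 ->
  naples_spot m.+2 (m.+2 - 1) occ b = naples_spot m.+2 (m.+2 - 2) occ b \/
  (b = m.+2 /\ naples_spot m.+2 (m.+2 - 1) occ b = Some 1 /\
   naples_spot m.+2 (m.+2 - 2) occ b = None /\
   forall x, 1 <= x <= m.+2 -> x \in 1 :: occ).
Proof.
move=> Hb.
have -> : m.+2 - 1 = m + 1 by lia.
have -> : m.+2 - 2 = m by lia.
rewrite /naples_spot.
case Hbo: (b \in occ) => /=; last by left.
rewrite iotaD filter_cat map_cat /=.
case EL: (filter _ (iota 1 m)) => [|s t] /=; last by left.
case C: ((1 + m < b) && (b - (1 + m) \notin occ)) => /=; last by left.
right; move/andP: C => [C1 C2].
have Eb : b = m.+2 by lia.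
subst b; split => //.
have -> : m.+2 - (1 + m) = 1 by lia.
rewrite subnn /=; do 2 split => //.
move=> x Hx; rewrite in_cons.
case: (eqVneq x 1) => [//|Hx1] /=.
case: (eqVneq x m.+2) => [->//|Hx2].
have Hj : m.+2 - x \in iota 1 m by rewrite mem_iota; lia.
have : m.+2 - x \notin filter (fun j => (j < m.+2) && (m.+2 - j \notin occ)) (iota 1 m)
  by rewrite EL.
rewrite mem_filter Hj andbT negb_and negbK.
have -> : m.+2 - (m.+2 - x) = x by lia.
by case/orP => // H; exfalso; move: H; rewrite ltnNge; lia.
Qed.

Lemma run_main m : forall beta occ,
  all (fun b => 1 <= b <= m.+2) beta ->
  naples_run m.+2 (m.+2 - 1) occ beta != None ->
  naples_run m.+2 (m.+2 - 2) occ beta = None ->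
  last 0 beta = m.+2.
Proof.
elim=> [|b beta IH] occ //= /andP[Hb Hall].
case: (@spot_cmp m occ b Hb) => [<-|[Eb [-> [-> Hfull]]]].
  case: (naples_spot _ _ occ b) => [s|] //= H1 H2.
  have := IH _ Hall H1 H2.
  by case: beta {IH Hall H1 H2}.
subst b; case: beta Hall {IH} => //= c beta /andP[Hc _].
by rewrite full_fail.
Qed.

Theorem lemma2p2 (n : nat) (beta : seq nat) :
  2 <= n ->
  in_PF n (n - 1) beta -> ~~ in_PF n (n - 2) beta ->
  last 0 beta = n.
Proof.
case: n => [|[|m]] // _.
rewrite /in_PF /is_pref => /andP[/andP[Hs Hall] H1].
rewrite Hs Hall /=.
case E: (naples_run _ _ _ _) => //= _.
move: E; rewrite /=; move=> E. Show. exact: (@run_main m beta [::] Hall H1 E).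
Qed.
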